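(* Let $(Y,G)$ and $(X,G)$ be compact metrizable dynamical systems and $\pi:Y\to X$ a factor map (continuous, surjective, $G$-equivariant) which is finite-to-one and a local homeomorphism (every point of $Y$ has a neighborhood on which $\pi$ restricts to a homeomorphism onto its image). Suppose $X$ is connected and $G$ is a compactly generated locally compact abelian group, i.e. there is a compact neighborhood $K$ of $0$ in $G$ with $G=\bigcup_{n\in\mathbb N}nK$, where $nK=K+\dots+K$ ($n$ summands). If $(X,G)$ is equicontinuous, then $(Y,G)$ is equicontinuous.
   Context: A system $(Z,G)$ with $Z$ a compact metric space and $G$ acting continuously is equicontinuous if the family of homeomorphisms $\{z\mapsto t\cdot z\}_{t\in G}$ is equicontinuous at every point of $Z$. *)

(* Defs.v *)
From Stdlib Require Import Reals List.
Open Scope R_scope.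

Definition is_metric {X : Type} (d : X -> X -> R) : Prop :=
  (forall x y, 0 <= d x y) /\
  (forall x y, d x y = 0 <-> x = y) /\
  (forall x y, d x y = d y x) /\
  (forall x y z, d x z <= d x y + d y z).

Definition m_open {X : Type} (d : X -> X -> R) (U : X -> Prop) : Prop :=
  forall x, U x -> exists r, r > 0 /\ forall y, d x y < r -> U y.

(* (sequential) compactness of a metric space; equivalent to compactness *)
Definition m_compact {X : Type} (d : X -> X -> R) : Prop :=
  forall u : nat -> X, exists (phi : nat -> nat) (l : X),
    (forall n, (phi n < phi (S n))%nat) /\
    forall eps, eps > 0 -> exists N, forall n, (n >= N)%nat -> d (u (phi n)) l < eps.

Definition m_connected {X : Type} (d : X -> X -> R) : Prop :=
  forall U : X -> Prop, m_open d U -> m_open d (fun x => ~ U x) ->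
    (forall x, U x) \/ (forall x, ~ U x).

Definition m_continuous {X Y : Type} (dX : X -> X -> R) (dY : Y -> Y -> R)
  (f : X -> Y) : Prop :=
  forall x eps, eps > 0 -> exists delta, delta > 0 /\
    forall x', dX x x' < delta -> dY (f x) (f x') < eps.

Definition is_topology {G : Type} (op : (G -> Prop) -> Prop) : Prop :=
  op (fun _ => True) /\
  (forall U V, op U -> op V -> op (fun x => U x /\ V x)) /\
  (forall (I : Type) (F : I -> G -> Prop), (forall i, op (F i)) ->
     op (fun x => exists i, F i x)) /\
  (forall U V, op U -> (forall x, U x <-> V x) -> op V).

Definition t_hausdorff {G : Type} (op : (G -> Prop) -> Prop) : Prop :=
  forall x y, x <> y -> exists U V, op U /\ op V /\ U x /\ V y /\
    forall z, ~ (U z /\ V z).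

Definition t_compact_set {G : Type} (op : (G -> Prop) -> Prop) (K : G -> Prop) : Prop :=
  forall (I : Type) (F : I -> G -> Prop), (forall i, op (F i)) ->
    (forall x, K x -> exists i, F i x) ->
    exists l : list I, forall x, K x -> exists i, In i l /\ F i x.

Definition t_nbhd {G : Type} (op : (G -> Prop) -> Prop) (K : G -> Prop) (g : G) : Prop :=
  exists U, op U /\ U g /\ forall x, U x -> K x.

Definition is_abelian_group {G : Type} (zero : G) (add : G -> G -> G) (opp : G -> G) : Prop :=
  (forall a b c, add a (add b c) = add (add a b) c) /\
  (forall a b, add a b = add b a) /\
  (forall a, add zero a = a) /\
  (forall a, add (opp a) a = zero).

Definition is_topological_group {G : Type} (op : (G -> Prop) -> Prop)
  (add : G -> G -> G) (opp : G -> G) : Prop :=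
  (forall a b W, op W -> W (add a b) ->
     exists U V, op U /\ op V /\ U a /\ V b /\
       forall x y, U x -> V y -> W (add x y)) /\
  (forall a W, op W -> W (opp a) ->
     exists U, op U /\ U a /\ forall x, U x -> W (opp x)).

Definition is_LCA_group {G : Type} (op : (G -> Prop) -> Prop)
  (zero : G) (add : G -> G -> G) (opp : G -> G) : Prop :=
  is_topology op /\ t_hausdorff op /\ is_abelian_group zero add opp /\
  is_topological_group op add opp /\
  (forall g, exists K, t_compact_set op K /\ t_nbhd op K g).

Fixpoint nsum {G : Type} (zero : G) (add : G -> G -> G) (K : G -> Prop) (n : nat) : G -> Prop :=
  match n with
  | O => fun g => g = zero
  | S m => fun g => exists k h, K k /\ nsum zero add K m h /\ g = add k h
  end.

Definition compactly_generated {G : Type} (op : (G -> Prop) -> Prop)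
  (zero : G) (add : G -> G -> G) (opp : G -> G) : Prop :=
  exists K, t_compact_set op K /\ t_nbhd op K zero /\
    forall g, exists n, nsum zero add K n g.

Definition is_cont_action {G X : Type} (op : (G -> Prop) -> Prop)
  (zero : G) (add : G -> G -> G) (d : X -> X -> R) (act : G -> X -> X) : Prop :=
  (forall x, act zero x = x) /\
  (forall g h x, act (add g h) x = act g (act h x)) /\
  (forall g x eps, eps > 0 -> exists U delta, op U /\ U g /\ delta > 0 /\
     forall g' x', U g' -> d x x' < delta -> d (act g x) (act g' x') < eps).

Definition equicontinuous {G X : Type} (d : X -> X -> R) (act : G -> X -> X) : Prop :=
  forall z eps, eps > 0 -> exists delta, delta > 0 /\
    forall z', d z z' < delta -> forall t, d (act t z) (act t z') < eps.

Definition finite_to_one {Y X : Type} (p : Y -> X) : Prop :=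
  forall x, exists l : list Y, forall y, p y = x -> In y l.

Definition local_homeo {Y X : Type} (dY : Y -> Y -> R) (dX : X -> X -> R)
  (p : Y -> X) : Prop :=
  forall y, exists U, m_open dY U /\ U y /\
    (forall u v, U u -> U v -> p u = p v -> u = v) /\
    (forall u eps, U u -> eps > 0 -> exists delta, delta > 0 /\
       forall v, U v -> dX (p u) (p v) < delta -> dY u v < eps).

(* Main.v *)
Require Import Defs.
From Stdlib Require Import Reals List Lra Lia Classical IndefiniteDescription.
Open Scope R_scope.

Lemma phi_ge (phi : nat -> nat) : (forall n, (phi n < phi (S n))%nat) -> forall n, (n <= phi n)%nat.
Proof. intros H n; induction n; [lia| specialize (H n); lia]. Qed.

Lemma inv_pos (n : nat) : / INR (S n) > 0.
Proof. apply Rinv_0_lt_compat, lt_0_INR; lia. Qed.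

Lemma small_inv (e : R) : e > 0 -> exists M, forall n, (n >= M)%nat -> / INR (S n) < e.
Proof.
  intros He. destruct (archimed_cor1 e He) as [N [HN HN0]].
  exists N. intros n Hn. eapply Rle_lt_trans; [|exact HN].
  apply Rinv_le_contravar. apply lt_0_INR; lia. apply le_INR; lia.
Qed.

Lemma list_min {A} (f : A -> R) (l : list A) :
  (forall i, In i l -> f i > 0) -> exists m, m > 0 /\ forall i, In i l -> m <= f i.
Proof.
  induction l as [|a l IH]; intros H.
  - exists 1; split; [lra| intros i []].
  - destruct IH as [m [Hm Hl]]. { intros i Hi; apply H; right; auto. }
    exists (Rmin m (f a)). split.
    + apply Rmin_pos; auto. apply H; left; auto.
    + intros i [<-|Hi]. apply Rmin_r. eapply Rle_trans; [apply Rmin_l| auto].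
Qed.

Lemma inj_radius (Y X : Type) (dY : Y->Y->R) (dX : X->X->R) (p : Y->X)
  (HdY : is_metric dY) (HYc : m_compact dY) (Hpl : local_homeo dY dX p) :
  exists r, r > 0 /\ forall u v, dY u v < r -> p u = p v -> u = v.
Proof.
  destruct HdY as [Hpos [Hzero [Hsym Htri]]].
  apply NNPP; intro Hno.
  assert (Hn : forall n : nat, exists uv : Y * Y, dY (fst uv) (snd uv) < / INR (S n)
     /\ p (fst uv) = p (snd uv) /\ fst uv <> snd uv).
  { intro n. apply NNPP; intro Hc. apply Hno. exists (/ INR (S n)). split.
    - apply inv_pos.
    - intros u v H1 H2. apply NNPP; intro H3. apply Hc. exists (u,v); simpl; auto. }
  apply functional_choice in Hn as [W HW].
  destruct (HYc (fun n => fst (W n))) as [phi [a [Hphi Hcv]]].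
  destruct (Hpl a) as [U [HUo [HUa [HUinj _]]]].
  destruct (HUo a HUa) as [rho [Hrho Hball]].
  destruct (Hcv (rho/2)) as [N HN]; [lra|].
  destruct (small_inv (rho/2)) as [M HM]; [lra|].
  set (n := max N M).
  pose proof (phi_ge phi Hphi n) as Hge.
  specialize (HN n ltac:(unfold n; lia)). simpl in HN.
  specialize (HM (phi n) ltac:(unfold n in *; lia)).
  destruct (HW (phi n)) as [H1 [H2 H3]].
  apply H3. apply HUinj; auto.
  - apply Hball. rewrite Hsym. lra.
  - apply Hball. pose proof (Htri a (fst (W (phi n))) (snd (W (phi n)))) as H.
    rewrite (Hsym a (fst (W (phi n)))) in H. lra.
Qed.

Lemma unif_inv (Y X : Type) (dY : Y->Y->R) (dX : X->X->R) (p : Y->X)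
  (HdY : is_metric dY) (HYc : m_compact dY) (HdX : is_metric dX)
  (Hpc : m_continuous dY dX p) (r : R) (Hr : r > 0)
  (Hinj : forall u v, dY u v < r -> p u = p v -> u = v) :
  forall eps, eps > 0 -> exists rho, rho > 0 /\
    forall u v, dY u v < r/2 -> dX (p u) (p v) < rho -> dY u v < eps.
Proof.
  destruct HdY as [Hpos [Hzero [Hsym Htri]]].
  destruct HdX as [HXpos [HXzero [HXsym HXtri]]].
  intros eps Heps. apply NNPP; intro Hno.
  assert (Hn : forall n:nat, exists uv : Y*Y, dY (fst uv) (snd uv) < r/2 /\
     dX (p (fst uv)) (p (snd uv)) < / INR (S n) /\ dY (fst uv) (snd uv) >= eps).
  { intro n. apply NNPP; intro Hc. apply Hno. exists (/ INR (S n)). split; [apply inv_pos|].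
    intros u v H1 H2. apply Rnot_le_lt; intro H3. apply Hc. exists (u,v); simpl;
    repeat split; auto; lra. }
  apply functional_choice in Hn as [W HW].
  destruct (HYc (fun n => fst (W n))) as [phi [a [Hphi Hcva]]].
  destruct (HYc (fun n => snd (W (phi n)))) as [psi [b [Hpsi Hcvb]]].
  assert (Ha : forall e, e > 0 -> exists N, forall n, (n >= N)%nat ->
     dY (fst (W (phi (psi n)))) a < e).
  { intros e He. destruct (Hcva e He) as [N HN]. exists N. intros n Hn.
    apply (HN (psi n)). pose proof (phi_ge psi Hpsi n). lia. }
  assert (Hb : forall e, e>0 -> exists N, forall n, (n>=N)%nat ->
     dY (snd (W (phi (psi n)))) b < e) by exact Hcvb.
  assert (Hab : p a = p b).
  { assert (Hsmall : forall eta, eta > 0 -> dX (p a) (p b) < eta).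
    { intros eta Heta.
      destruct (Hpc a (eta/3)) as [da [Hda Hca]]; [lra|].
      destruct (Hpc b (eta/3)) as [db [Hdb Hcb]]; [lra|].
      destruct (Ha da Hda) as [N1 HN1]. destruct (Hb db Hdb) as [N2 HN2].
      destruct (small_inv (eta/3)) as [M HM]; [lra|].
      set (n := max N1 (max N2 M)).
      specialize (HN1 n ltac:(unfold n; lia)). specialize (HN2 n ltac:(unfold n; lia)).
      pose proof (phi_ge phi Hphi (psi n)). pose proof (phi_ge psi Hpsi n).
      specialize (HM (phi (psi n)) ltac:(unfold n in *; lia)).
      destruct (HW (phi (psi n))) as [H1 [H2 H3]].
      set (u := fst (W (phi (psi n)))) in *. set (v := snd (W (phi (psi n)))) in *.
      specialize (Hca u ltac:(rewrite Hsym; exact HN1)).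
      specialize (Hcb v ltac:(rewrite Hsym; exact HN2)).
      pose proof (HXtri (p a) (p u) (p b)). pose proof (HXtri (p u) (p v) (p b)) as H5.
      rewrite (HXsym (p v) (p b)) in H5. lra. }
    destruct (Rle_lt_or_eq_dec _ _ (HXpos (p a) (p b))) as [Hlt|Heq].
    - specialize (Hsmall _ Hlt). lra.
    - apply (proj1 (HXzero _ _)); auto. }
  set (e := Rmin (r/4) (eps/2)).
  assert (He : e > 0) by (apply Rmin_pos; lra).
  assert (He1 : e <= r/4) by apply Rmin_l.
  assert (He2 : e <= eps/2) by apply Rmin_r.
  destruct (Ha e He) as [N1 HN1]. destruct (Hb e He) as [N2 HN2].
  set (n := max N1 N2).
  specialize (HN1 n ltac:(unfold n; lia)). specialize (HN2 n ltac:(unfold n; lia)).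
  destruct (HW (phi (psi n))) as [H1 [H2 H3]].
  set (u := fst (W (phi (psi n)))) in *. set (v := snd (W (phi (psi n)))) in *.
  assert (Hdab : dY a b < r).
  { pose proof (Htri a u b). pose proof (Htri u v b). rewrite (Hsym a u) in *. lra. }
  pose proof (Hinj a b Hdab Hab) as Heq. subst b.
  pose proof (Htri u a v). rewrite (Hsym a v) in *. lra.
Qed.

Lemma unif_K (G Y : Type) (opG : (G->Prop)->Prop) (zero : G) (add : G -> G -> G)
  (dY : Y->Y->R) (actY : G->Y->Y)
  (HdY : is_metric dY) (HYc : m_compact dY) (HactY : is_cont_action opG zero add dY actY)
  (K : G -> Prop) (HK : t_compact_set opG K) :
  forall r, r > 0 -> exists delta, delta > 0 /\
    forall k a b, K k -> dY a b < delta -> dY (actY k a) (actY k b) < r.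
Proof.
  destruct HdY as [Hpos [Hzero [Hsym Htri]]].
  destruct HactY as [_ [_ Hcont]].
  intros r Hr. apply NNPP; intro Hno.
  assert (Hn : forall n:nat, exists w : G * (Y*Y), K (fst w) /\
     dY (fst (snd w)) (snd (snd w)) < / INR (S n) /\
     dY (actY (fst w) (fst (snd w))) (actY (fst w) (snd (snd w))) >= r).
  { intro n. apply NNPP; intro Hc. apply Hno. exists (/ INR (S n)). split; [apply inv_pos|].
    intros k a b Hk Hab. apply Rnot_le_lt; intro H3. apply Hc. exists (k,(a,b)); simpl;
    repeat split; auto; lra. }
  apply functional_choice in Hn as [W HW].
  destruct (HYc (fun n => fst (snd (W n)))) as [phi [a [Hphi Hcv]]].
  set (I := {q : (G -> Prop) * R | opG (fst q) /\ snd q > 0 /\ exists g, forall g' x',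
     fst q g' -> dY a x' < snd q -> dY (actY g a) (actY g' x') < r/2}).
  destruct (HK I (fun i => fst (proj1_sig i))) as [l Hl].
  - intros i. exact (proj1 (proj2_sig i)).
  - intros g Hg. destruct (Hcont g a (r/2)) as [U [delta [HU [HUg [Hd Hprop]]]]]; [lra|].
    exists (exist _ (U, delta) (conj HU (conj Hd (ex_intro _ g Hprop)))). simpl. exact HUg.
  - destruct (list_min (fun i : I => snd (proj1_sig i)) l) as [m [Hm Hml]].
    { intros i _. exact (proj1 (proj2 (proj2_sig i))). }
    destruct (Hcv (m/2)) as [N HN]; [lra|].
    destruct (small_inv (m/2)) as [M HM]; [lra|].
    set (n := max N M).
    specialize (HN n ltac:(unfold n; lia)). simpl in HN. pose proof (phi_ge phi Hphi n).
    specialize (HM (phi n) ltac:(unfold n in *; lia)).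
    destruct (HW (phi n)) as [HK1 [H2 H3]].
    destruct (Hl _ HK1) as [i [Hin HUk]].
    specialize (Hml i Hin).
    destruct i as [[U delta] [HU [Hd [g Hg]]]]; simpl in *.
    set (k := fst (W (phi n))) in *. set (x := fst (snd (W (phi n)))) in *.
    set (y := snd (snd (W (phi n)))) in *.
    assert (Hx : dY a x < delta) by (rewrite Hsym; lra).
    assert (Hx2 : dY a x < m/2) by (rewrite Hsym; lra).
    assert (Hy : dY a y < delta) by (pose proof (Htri a x y); lra).
    pose proof (Hg k x HUk Hx). pose proof (Hg k y HUk Hy).
    pose proof (Htri (actY k x) (actY g a) (actY k y)).
    rewrite (Hsym (actY k x) (actY g a)) in *. lra.
Qed.

Theorem mainTheorem4
  (G : Type) (opG : (G -> Prop) -> Prop) (zero : G) (add : G -> G -> G) (opp : G -> G)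
  (HG : is_LCA_group opG zero add opp)
  (HGcg : compactly_generated opG zero add opp)
  (Y : Type) (dY : Y -> Y -> R) (HdY : is_metric dY) (HYc : m_compact dY)
  (actY : G -> Y -> Y) (HactY : is_cont_action opG zero add dY actY)
  (X : Type) (dX : X -> X -> R) (HdX : is_metric dX) (HXc : m_compact dX)
  (actX : G -> X -> X) (HactX : is_cont_action opG zero add dX actX)
  (p : Y -> X)
  (Hpc : m_continuous dY dX p)
  (Hps : forall x, exists y, p y = x)
  (Hpe : forall g y, p (actY g y) = actX g (p y))
  (Hpf : finite_to_one p)
  (Hpl : local_homeo dY dX p)
  (HXconn : m_connected dX)
  (HXeq : equicontinuous dX actX) :
  equicontinuous dY actY.
Proof.
  destruct (inj_radius Y X dY dX p HdY HYc Hpl) as [r [Hr Hinj]].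
  destruct HGcg as [K [HKc [_ HKgen]]].
  intros z eps Heps.
  destruct (unif_K G Y opG zero add dY actY HdY HYc HactY K HKc (r/2)) as [d1 [Hd1 Hunif]];
    [lra|].
  set (e' := Rmin eps d1).
  assert (He' : e' > 0) by (apply Rmin_pos; lra).
  destruct (unif_inv Y X dY dX p HdY HYc HdX Hpc r Hr Hinj e' He') as [rho [Hrho Hinv]].
  destruct (HXeq (p z) rho Hrho) as [dx [Hdx Heqx]].
  destruct (Hpc z dx Hdx) as [dp [Hdp Hcp]].
  exists (Rmin e' dp). split; [apply Rmin_pos; lra|].
  intros z' Hzz' t.
  destruct HactY as [H0 [Hadd _]].
  assert (Hind : forall n t, nsum zero add K n t -> dY (actY t z) (actY t z') < e').
  { induction n as [|n IH]; intros t0 Ht0; simpl in Ht0.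
    - subst t0. rewrite !H0. eapply Rlt_le_trans; [exact Hzz'| apply Rmin_l].
    - destruct Ht0 as [k [h [Hk [Hh ->]]]].
      apply Hinv.
      + rewrite !Hadd. apply Hunif; auto.
        eapply Rlt_le_trans; [apply IH; exact Hh| apply Rmin_r].
      + rewrite !Hpe. apply Heqx. apply Hcp.
        eapply Rlt_le_trans; [exact Hzz'|apply Rmin_r]. }
  destruct (HKgen t) as [n Hn].
  eapply Rlt_le_trans; [apply (Hind n t Hn)| apply Rmin_l].
Qed.
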